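(* Let $L=\sum_k(1+\alpha d_k)E_{kk}+\alpha\lambda\sum_kE_{k+1,k}$, $U=I-\alpha\sum_{j=1}^m\lambda^{-j}\sum_kc_k^{(j)}E_{k,k+j}$, $B_1=\sum_k(d_k+\alpha c_{k-1}^{(1)})E_{kk}+\lambda\sum_kE_{k+1,k}$, $B_2=\sum_k(d_k+\alpha c_k^{(1)})E_{kk}+\lambda\sum_kE_{k+1,k}$. The Lax triads $\dot L=LB_2-B_1L$, $\dot U=UB_2-B_1U$ are equivalent to the system $\dot d_k=(1+\alpha d_k)(c_k^{(1)}-c_{k-1}^{(1)})$, $\dot c_k^{(j)}=c_k^{(j)}(d_{k+j}-d_k+\alpha c_{k+j}^{(1)}-\alpha c_{k-1}^{(1)})+(c_k^{(j+1)}-c_{k-1}^{(j+1)})$ ($1\le j\le m-1$), $\dot c_k^{(m)}=c_k^{(m)}(d_{k+m}-d_k+\alpha c_{k+m}^{(1)}-\alpha c_{k-1}^{(1)})$. Moreover $B_1=\pi_+((LU^{-1}-I)/\alpha)$ and $B_2=\pi_+((U^{-1}L-I)/\alpha)$.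
   Context: Periodic lattice setting: $N\ge2$, $m\ge1$, $\alpha\ne0$ real; matrices are elements of the twisted loop algebra $\{X(\lambda)\in gl(N)[\lambda,\lambda^{-1}]:\Omega X(\lambda)\Omega^{-1}=X(\omega\lambda)\}$ ($\omega=e^{2\pi i/N}$, $\Omega=\mathrm{diag}(1,\omega,\dots,\omega^{N-1})$), with all matrix indices and subscripts modulo $N$; $E_{jk}$ matrix units. $\pi_+$ is the projection onto the part of nonnegative degree in $\lambda$; $U^{-1}$ is the formal power series in $\lambda^{-1}$. The variables are $d_k,c_k^{(j)}$, $1\le k\le N$, $1\le j\le m$. *)

(* Defs.v *)
From HB Require Import structures.
From mathcomp Require Import all_boot all_order all_algebra.
From mathcomp Require Import all_classical all_reals all_analysis.
Set Implicit Arguments. Unset Strict Implicit. Unset Printing Implicit Defensive.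
Import Order.TTheory GRing.Theory Num.Theory.
Local Open Scope ring_scope.

Lemma ord_gt0 (N : nat) (k : 'I_N) : (0 < N)%N.
Proof. exact: leq_ltn_trans (leq0n k) (ltn_ord k). Qed.

Definition cyc_add (N : nat) (k : 'I_N) (j : nat) : 'I_N :=
  Ordinal (ltn_pmod (k + j)%N (ord_gt0 k)).
Definition cyc_prev (N : nat) (k : 'I_N) : 'I_N := cyc_add k N.-1.

(* A matrix-valued formal Laurent series in lambda is represented by its
   coefficient function  X : int -> 'M_N,  X n = coefficient of lambda^n.
   All series used below have degree bounded above. *)
Definition lser (R : pzRingType) (N : nat) := int -> 'M[R]_N.

Definition deg_le (R : pzRingType) (N : nat) (p : int) (X : lser R N) :=
  forall n : int, p < n -> X n = 0.

(* Product of series X (degree <= p) and Y (degree <= q):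
   (XY)_n = sum_{a = n-q}^{p} X_a Y_{n-a}  (a finite sum). *)
Definition lmul (R : pzRingType) (N : nat) (p q : int) (X Y : lser R N) : lser R N :=
  fun n => \sum_(i < (absz (p + q - n)%R).+1 | n <= p + q)
              X (n - q + (i : nat)%:Z) *m Y (q - (i : nat)%:Z).

Definition lone (R : pzRingType) (N : nat) : lser R N :=
  fun n => if n == 0 then 1%:M else 0.

Definition piplus (R : pzRingType) (N : nat) (X : lser R N) : lser R N :=
  fun n => if 0 <= n then X n else 0.

Section LaxMatrices.
Variables (R : realType) (N m : nat) (alpha : R).
(* values of the variables at a given time *)
Variables (d : 'I_N -> R) (c : nat -> 'I_N -> R).  (* c j k = c_k^{(j)} *)

Definition shiftE : 'M[R]_N := \sum_(k < N) delta_mx (cyc_add k 1) k.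

Definition Lmat : lser R N := fun n =>
  if n == 0 then \sum_(k < N) (1 + alpha * d k) *: delta_mx k k
  else if n == 1 then alpha *: shiftE else 0.

Definition Umat : lser R N := fun n =>
  if n == 0 then 1%:M
  else if (n < 0) && ((absz n) <= m)%N then
    - (alpha *: \sum_(k < N) c (absz n) k *: delta_mx k (cyc_add k (absz n)))
  else 0.

Definition B1mat : lser R N := fun n =>
  if n == 0 then \sum_(k < N) (d k + alpha * c 1%N (cyc_prev k)) *: delta_mx k k
  else if n == 1 then shiftE else 0.

Definition B2mat : lser R N := fun n =>
  if n == 0 then \sum_(k < N) (d k + alpha * c 1%N k) *: delta_mx k k
  else if n == 1 then shiftE else 0.

End LaxMatrices.

Definition mderive (R : realType) (N : nat) (F : R -> 'M[R]_N) (t : R) : 'M[R]_N :=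
  \matrix_(i, j) derive1 (fun s => F s i j) t.

(* Main.v *)
Require Import Defs.
From HB Require Import structures.
From mathcomp Require Import all_boot all_order all_algebra.
From mathcomp Require Import all_classical all_reals all_analysis.
From mathcomp Require Import zify ring.
Set Implicit Arguments. Unset Strict Implicit. Unset Printing Implicit Defensive.
Import Order.TTheory GRing.Theory Num.Theory.
Local Open Scope ring_scope.

Section Aux.
Variables (R : realType) (N : nat).

Definition Pm (f : 'I_N -> R) (g : 'I_N -> 'I_N) : 'M[R]_N :=
  \sum_(k < N) f k *: delta_mx k (g k).

Lemma PmE f g i j : Pm f g i j = (j == g i)%:R * f i.
Proof.
rewrite /Pm summxE (bigD1 i) //= big1 => [|k nk]; rewrite !mxE.
  by rewrite eqxx /= addr0 mulrC.
by rewrite eq_sym (negbTE nk) mulr0.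
Qed.

Lemma Pm_ext f f' g g' : (forall k, f k = f' k) -> (forall k, g k = g' k) ->
  Pm f g = Pm f' g'.
Proof. by move=> hf hg; apply: eq_bigr => k _; rewrite hf hg. Qed.

Lemma PmM f g f' g' : Pm f g *m Pm f' g' = Pm (fun k => f k * f' (g k)) (fun k => g' (g k)).
Proof.
apply/matrixP => i l; rewrite !mxE (bigD1 (g i)) //= big1 => [|k nk].
  by rewrite !PmE eqxx addr0 mul1r; case: eqP; rewrite ?mul1r ?mul0r ?mulr0 // mulrA.
by rewrite PmE (negbTE nk) mul0r mul0r.
Qed.

Lemma PmD f f' g : Pm f g + Pm f' g = Pm (fun k => f k + f' k) g.
Proof. by apply/matrixP => i j; rewrite !mxE !PmE mulrDr. Qed.

Lemma PmN f g : - Pm f g = Pm (fun k => - f k) g.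
Proof. by apply/matrixP => i j; rewrite !mxE !PmE mulrN. Qed.

Lemma PmZ a f g : a *: Pm f g = Pm (fun k => a * f k) g.
Proof. by apply/matrixP => i j; rewrite !mxE !PmE mulrCA. Qed.

Lemma Pm0 g : Pm (fun _ => 0) g = 0.
Proof. by apply/matrixP => i j; rewrite !mxE !PmE mulr0. Qed.

Lemma Pm_at f g i : Pm f g i (g i) = f i.
Proof. by rewrite PmE eqxx mul1r. Qed.

Lemma cyc_add0 (k : 'I_N) : cyc_add k 0 = k.
Proof. by apply: val_inj; rewrite /= addn0 modn_small. Qed.

Lemma cyc_prev_addS (k : 'I_N) j : cyc_prev (cyc_add k j.+1) = cyc_add k j.
Proof.
apply: val_inj; rewrite /= modnDml.
have hN := ord_gt0 k.
by rewrite (_ : (k + j.+1 + N.-1 = k + j + N)%N) ?modnDr //; lia.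
Qed.

Lemma cyc_add_prevS (k : 'I_N) j : cyc_add (cyc_prev k) j.+1 = cyc_add k j.
Proof.
apply: val_inj; rewrite /= modnDml.
have hN := ord_gt0 k.
by rewrite (_ : (k + N.-1 + j.+1 = k + j + N)%N) ?modnDr //; lia.
Qed.

Lemma shiftE_Pm : shiftE R N = Pm (fun _ => 1) (@cyc_prev N).
Proof.
apply/matrixP => i j; rewrite PmE mulr1 /shiftE summxE (bigD1 j) //= big1 => [|k nk].
  rewrite !mxE eqxx andbT addr0; congr ((nat_of_bool _)%:R); apply/eqP/eqP => [->|->].
    by rewrite (cyc_prev_addS j 0) cyc_add0.
  by rewrite (cyc_add_prevS i 0) cyc_add0.
by rewrite !mxE (eq_sym j) (negbTE nk) andbF.
Qed.

Lemma one_Pm : 1%:M = Pm (fun _ => 1) (fun k => k) :> 'M[R]_N.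
Proof. by apply/matrixP => i j; rewrite PmE mulr1 !mxE eq_sym. Qed.

Definition supp01 (X : lser R N) := forall b : int, b != 0 -> b != 1 -> X b = 0.

Lemma lmul_r (p : int) (X Y : lser R N) n : 0 <= p -> deg_le p X -> supp01 Y ->
  lmul p 1 X Y n = X n *m Y 0 + X (n - 1) *m Y 1.
Proof.
move=> p0 hX hY; rewrite /lmul.
case: (lerP n (p + 1)) => hn; last first.
  rewrite big1 => [|//].
  by rewrite !hX ?mul0mx ?addr0 //; lia.
have : ((absz (p + 1 - n)%R)%:Z = (p + 1 - n)%R) by rewrite gez0_abs; lia.
case: (absz _) => [|K] hK.
  rewrite big_ord1 /= (hX n); last by lia.
  by rewrite mul0mx add0r subr0 addr0.
rewrite 2!big_ord_recl /= big1 => [|i _]; last first.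
  rewrite hY ?mulmx0 //; lia.
have -> : n - 1 + (bump 0 0)%:Z = n by rewrite /bump /=; lia.
have -> : 1 - (bump 0 0)%:Z = 0 by rewrite /bump /=; lia.
have -> : 1 - (0%N)%:Z = 1 :> int by [].
by rewrite addr0 addrC addr0.
Qed.

Lemma lmul_l (q : int) (X Y : lser R N) n : 0 <= q -> supp01 X -> deg_le q Y ->
  lmul 1 q X Y n = X 0 *m Y n + X 1 *m Y (n - 1).
Proof.
move=> q0 hX hY; rewrite /lmul.
case: (lerP n (1 + q)) => hn; last first.
  rewrite big1 => [|//].
  by rewrite !hY ?mulmx0 ?addr0 //; lia.
have : ((absz (1 + q - n)%R)%:Z = (1 + q - n)%R) by rewrite gez0_abs; lia.
case: (absz _) => [|K] hK.
  rewrite big_ord1 /= (hY n); last by lia.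
  rewrite mulmx0 add0r.
  have -> : n - q + (0%N)%:Z = 1 by lia.
  by have -> : q - (0%N)%:Z = n - 1 by lia.
rewrite 2!big_ord_recr /= big1 => [|i _]; last first.
  move: (ltn_ord i) => hi; rewrite hX ?mul0mx //=; lia.
rewrite add0r.
have -> : n - q + K%:Z = 0 by lia.
have -> : n - q + (K.+1)%:Z = 1 by lia.
have -> : q - K%:Z = n by lia.
by have -> : q - (K.+1)%:Z = n - 1 by lia.
Qed.

Lemma supp01_deg (X : lser R N) : supp01 X -> deg_le 1 X.
Proof. move=> h n hn; apply: h; lia. Qed.

Lemma Pm_add0 f : Pm f (fun k => cyc_add k 0) = Pm f (fun k => k).
Proof. by apply: Pm_ext => // k; rewrite cyc_add0. Qed.

Lemma PmM_addS_prev f a j :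
  Pm f (fun k => cyc_add k j.+1) *m Pm (fun _ => a) (@cyc_prev N) =
  Pm (fun k => f k * a) (fun k => cyc_add k j).
Proof. by rewrite PmM; apply: Pm_ext => k; rewrite ?cyc_prev_addS. Qed.

Lemma PmM_prev_addS f a j :
  Pm (fun _ => a) (@cyc_prev N) *m Pm f (fun k => cyc_add k j.+1) =
  Pm (fun k => a * f (cyc_prev k)) (fun k => cyc_add k j).
Proof. by rewrite PmM; apply: Pm_ext => k; rewrite ?cyc_add_prevS. Qed.

End Aux.

Ltac pmsimp := repeat (first [rewrite PmZ | rewrite PmN | rewrite PmD]).

Section Static.
Variables (R : realType) (N m : nat) (alpha : R) (hm : (1 <= m)%N).
Variables (d : 'I_N -> R) (c : nat -> 'I_N -> R).

Notation S := (Pm (fun _ => 1) (@cyc_prev N)).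
Notation I := (Pm (fun _ => (1:R)) (fun k : 'I_N => k)).

Lemma Lmat0 : Lmat alpha d 0 = Pm (fun k => 1 + alpha * d k) (fun k => k).
Proof. by rewrite /Lmat eqxx. Qed.
Lemma Lmat1 : Lmat alpha d 1 = alpha *: S.
Proof. by rewrite /Lmat /= shiftE_Pm. Qed.
Lemma Lmat_supp : supp01 (Lmat alpha d).
Proof. by move=> b /negbTE b0 /negbTE b1; rewrite /Lmat b0 b1. Qed.

Lemma B1mat0 : B1mat alpha d c 0 = Pm (fun k => d k + alpha * c 1%N (cyc_prev k)) (fun k => k).
Proof. by rewrite /B1mat eqxx. Qed.
Lemma B1mat1 : B1mat alpha d c 1 = S.
Proof. by rewrite /B1mat /= shiftE_Pm. Qed.
Lemma B1mat_supp : supp01 (B1mat alpha d c).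
Proof. by move=> b /negbTE b0 /negbTE b1; rewrite /B1mat b0 b1. Qed.

Lemma B2mat0 : B2mat alpha d c 0 = Pm (fun k => d k + alpha * c 1%N k) (fun k => k).
Proof. by rewrite /B2mat eqxx. Qed.
Lemma B2mat1 : B2mat alpha d c 1 = S.
Proof. by rewrite /B2mat /= shiftE_Pm. Qed.
Lemma B2mat_supp : supp01 (B2mat alpha d c).
Proof. by move=> b /negbTE b0 /negbTE b1; rewrite /B2mat b0 b1. Qed.

Lemma laxL n :
  lmul 1 1 (Lmat alpha d) (B2mat alpha d c) n - lmul 1 1 (B1mat alpha d c) (Lmat alpha d) n =
  if n == 0 then alpha *: Pm (fun k => (1 + alpha * d k) * (c 1%N k - c 1%N (cyc_prev k))) (fun k => k)
  else 0.
Proof.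
rewrite (lmul_r _ _ (supp01_deg Lmat_supp) B2mat_supp) //.
rewrite (lmul_r _ _ (supp01_deg B1mat_supp) Lmat_supp) //.
have [->|n0] := eqVneq n 0.
  rewrite sub0r (Lmat_supp (b := -1)) // (B1mat_supp (b := -1)) // !mul0mx !addr0.
  rewrite Lmat0 B1mat0 B2mat0 !PmM PmN PmD PmZ.
  by apply: Pm_ext => // k; ring.
have [->|n1] := eqVneq n 1.
  rewrite subrr Lmat0 B1mat0 B2mat0 Lmat1 B1mat1 B2mat1 -?scalemxAl -?scalemxAr !PmM.
  by rewrite !PmZ !PmD PmN PmD -(Pm0 _ (@cyc_prev N)); apply: Pm_ext => // k; ring.
rewrite (Lmat_supp (b := n)) // (B1mat_supp (b := n)) // !mul0mx !add0r.
have [->|n2] := eqVneq n 2.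
  rewrite (_ : 2 - 1 = 1) // Lmat1 B1mat1 B2mat1 -?scalemxAl -?scalemxAr.
  by rewrite subrr.
rewrite (Lmat_supp (b := n - 1)) ?(B1mat_supp (b := n - 1)) ?mul0mx ?subrr //; lia.
Qed.

Lemma UmatN j : Umat m alpha c (Negz j) =
  if (j < m)%N then -(alpha *: Pm (c j.+1) (fun k => cyc_add k j.+1)) else 0.
Proof. by rewrite /Umat /=. Qed.
Lemma UmatP0 : Umat m alpha c (Posz 0) = I.
Proof. by rewrite /Umat eqxx one_Pm. Qed.
Lemma UmatPS n : Umat m alpha c (Posz n.+1) = 0.
Proof. by rewrite /Umat /=. Qed.
Lemma Umat_deg : deg_le 0 (Umat m alpha c).
Proof. by case=> [[|n]|j] //= _; rewrite UmatPS. Qed.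

Definition rhsU j k := c j k * (d (cyc_add k j) - d k + alpha * c 1%N (cyc_add k j)
                      - alpha * c 1%N (cyc_prev k))
           + (if (j < m)%N then c j.+1 k - c j.+1 (cyc_prev k) else 0).

Lemma laxU n :
  lmul 0 1 (Umat m alpha c) (B2mat alpha d c) n - lmul 1 0 (B1mat alpha d c) (Umat m alpha c) n =
  match n with Posz _ => 0
  | Negz j => if (j < m)%N then -(alpha *: Pm (rhsU j.+1) (fun k => cyc_add k j.+1)) else 0 end.
Proof.
rewrite (@lmul_r _ _ 0 _ _ n (lexx _) Umat_deg B2mat_supp).
rewrite (@lmul_l _ _ 0 _ _ n (lexx _) B1mat_supp Umat_deg).
rewrite B2mat0 B2mat1 B1mat0 B1mat1.
case: n => [[|[|n]]|j].
- rewrite (_ : Posz 0 - 1 = Negz 0) // UmatP0 UmatN hm.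
  rewrite !PmZ !PmN PmM_addS_prev PmM_prev_addS !Pm_add0 !PmM.
  by pmsimp; rewrite -(Pm0 _ (fun k : 'I_N => k)); apply: Pm_ext => // k; ring.
- rewrite (_ : Posz 1 - 1 = Posz 0) // UmatP0 UmatPS !mul0mx !mulmx0 !add0r !PmM.
  by pmsimp; rewrite -(Pm0 _ (@cyc_prev N)); apply: Pm_ext => // k; ring.
- by rewrite (_ : Posz n.+2 - 1 = Posz n.+1) // !UmatPS !mul0mx !mulmx0 !addr0 subrr.
- rewrite (_ : Negz j - 1 = Negz j.+1); last by rewrite !NegzE; lia.
  rewrite !UmatN; case: (ltnP j m) => hj; last first.
    by rewrite ltnNge (leqW hj) /= !mul0mx !mulmx0 !addr0 subrr.
  rewrite /rhsU; case: (ltnP j.+1 m) => hj1.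
    rewrite !PmZ !PmN PmM_addS_prev PmM_prev_addS !PmM.
    by pmsimp; apply: Pm_ext => // k; ring.
  rewrite !mul0mx !mulmx0 !addr0.
  rewrite !PmZ !PmN !PmM.
  by pmsimp; apply: Pm_ext => // k; ring.
Qed.

Lemma Bform (V : lser R N) : alpha != 0 -> deg_le 0 V ->
  lmul 0 0 (Umat m alpha c) V = lone R N ->
  B1mat alpha d c = piplus (fun n => alpha^-1 *: (lmul 1 0 (Lmat alpha d) V n - lone R N n)) /\
  B2mat alpha d c = piplus (fun n => alpha^-1 *: (lmul 0 1 V (Lmat alpha d) n - lone R N n)).
Proof.
move=> ha hV hUV.
have h0 := congr1 (fun F => F 0) hUV.
have h1 := congr1 (fun F => F (Negz 0)) hUV.
rewrite /lmul /= big_mkcond big_ord_recl big_ord0 /= in h0; rewrite /lmul /= big_mkcond !big_ord_recl big_ord0 /= in h1.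
change (Umat m alpha c 0 *m V 0 + 0 = lone R N 0) in h0.
change (Umat m alpha c (Negz 0) *m V 0 + (Umat m alpha c 0 *m V (Negz 0) + 0)
   = lone R N (Negz 0)) in h1.
rewrite UmatP0 -one_Pm mul1mx addr0 /lone eqxx in h0.
rewrite UmatN hm UmatP0 -one_Pm mul1mx h0 mulmx1 addr0 /lone /= in h1.
move/eqP: h1; rewrite addrC subr_eq0 => /eqP h1.
split; apply/funext => n; rewrite /piplus.
- rewrite (@lmul_l _ _ 0 _ _ n (lexx _) Lmat_supp hV).
  case: n => [[|[|n]]|j].
  + rewrite (_ : Posz 0 - 1 = Negz 0) // h1 h0 /lone /= B1mat0 Lmat0 Lmat1 one_Pm.
    rewrite !PmZ PmM_prev_addS Pm_add0 !PmM; pmsimp; by apply: Pm_ext => // k; field.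
  + rewrite (_ : Posz 1 - 1 = Posz 0) // h0 (hV 1) // /lone /= B1mat1 Lmat1 one_Pm.
    rewrite mulmx0 add0r subr0 !PmZ !PmM; pmsimp; by apply: Pm_ext => // k; field.
  + rewrite (_ : Posz n.+2 - 1 = Posz n.+1) // !hV // /lone /= B1mat_supp //.
    by rewrite !mulmx0 addr0 subr0 scaler0.
  + by rewrite /= B1mat_supp.
- rewrite (@lmul_r _ _ 0 _ _ n (lexx _) hV Lmat_supp).
  case: n => [[|[|n]]|j].
  + rewrite (_ : Posz 0 - 1 = Negz 0) // h1 h0 /lone /= B2mat0 Lmat0 Lmat1 one_Pm.
    rewrite !PmZ PmM_addS_prev Pm_add0 !PmM; pmsimp; by apply: Pm_ext => // k; field.
  + rewrite (_ : Posz 1 - 1 = Posz 0) // h0 (hV 1) // /lone /= B2mat1 Lmat1 one_Pm.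
    rewrite mul0mx add0r subr0 !PmZ !PmM; pmsimp; by apply: Pm_ext => // k; field.
  + rewrite (_ : Posz n.+2 - 1 = Posz n.+1) // !hV // /lone /= B2mat_supp //.
    by rewrite !mul0mx addr0 subr0 scaler0.
  + by rewrite /= B2mat_supp.
Qed.

End Static.

Lemma dlin (R : realType) (f : R -> R) t a b : derivable f t 1 ->
  derive1 (fun s => a * f s + b) t = a * derive1 f t.
Proof. move=> hf. rewrite !derive1E.
have -> : (fun s => a*f s + b) = (a *: f) + cst b by apply/funext.
rewrite deriveD // ?deriveZ ?derive_cst ?addr0 //.
exact: derivableZ.
Qed.

Section Deriv.
Variables (R : realType) (N m : nat) (alpha : R).

Lemma mderive_Pm a (f : 'I_N -> R -> R) g (B : 'M[R]_N) t :
  (forall k, derivable (f k) t 1) ->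
  mderive (fun s => a *: Pm (fun k => f k s) g + B) t = a *: Pm (fun k => derive1 (f k) t) g.
Proof.
move=> hf; apply/matrixP => i j; rewrite !mxE PmE.
have -> : (fun s => (a *: Pm (fun k => f k s) g + B) i j) =
   (fun s => (a * (j == g i)%:R) * f i s + B i j).
  by apply/funext => s; rewrite !mxE PmE mulrA (mulrC a).
by rewrite dlin // mulrA (mulrC a).
Qed.

Lemma mderive_cst (B : 'M[R]_N) t : mderive (fun _ => B) t = 0.
Proof. by apply/matrixP => i j; rewrite !mxE; exact: derive1_cst. Qed.

Variables (d : 'I_N -> R -> R) (c : nat -> 'I_N -> R -> R).

Lemma derL n t : (forall k, derivable (d k) t 1) ->
  mderive (fun s => Lmat alpha (fun k => d k s) n) t =
  if n == 0 then alpha *: Pm (fun k => derive1 (d k) t) (fun k => k) else 0.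
Proof.
move=> hd; have [->|n0] := eqVneq n 0.
  rewrite (_ : (fun s => Lmat alpha (fun k => d k s) 0) =
     fun s => alpha *: Pm (fun k => d k s) (fun k => k) + Pm (fun _ => 1) (fun k => k)).
    exact: mderive_Pm.
  by apply/funext => s; rewrite Lmat0 PmZ PmD; apply: Pm_ext => // k; rewrite addrC.
rewrite (_ : (fun s => Lmat alpha (fun k => d k s) n) = fun _ => Lmat alpha (fun _ => 0) n).
  exact: mderive_cst.
by apply/funext => s; rewrite /Lmat (negbTE n0).
Qed.

Lemma derU n t : (forall j k, (1 <= j <= m)%N -> derivable (c j k) t 1) ->
  mderive (fun s => Umat m alpha (fun j k => c j k s) n) t =
  match n with Posz _ => 0
  | Negz j => if (j < m)%N then -(alpha *: Pm (fun k => derive1 (c j.+1 k) t) (fun k => cyc_add k j.+1)) else 0 end.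
Proof.
move=> hc; case: n => [n|j].
  rewrite (_ : (fun s => Umat m alpha (fun j k => c j k s) n) = fun _ => Umat m alpha (fun _ _ => 0) n).
    exact: mderive_cst.
  by apply/funext => s; case: n => [|n]; rewrite ?UmatP0 ?UmatPS.
case: (ltnP j m) => hj.
  rewrite (_ : (fun s => Umat m alpha (fun j k => c j k s) (Negz j)) =
     fun s => (- alpha) *: Pm (fun k => c j.+1 k s) (fun k => cyc_add k j.+1) + 0).
    by rewrite mderive_Pm ?scaleNr // => k; apply: hc; rewrite /= hj.
  by apply/funext => s; rewrite UmatN hj addr0 scaleNr.
rewrite (_ : (fun s => Umat m alpha (fun j k => c j k s) (Negz j)) = fun _ => 0).
  exact: mderive_cst.
by apply/funext => s; rewrite UmatN ltnNge hj.
Qed.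

End Deriv.

Lemma inv_exists (R : realType) (N m : nat) (U : lser R N) :
  U 0 = 1%:M -> deg_le 0 U -> (forall n : int, n < - (m:int) -> U n = 0) ->
  exists V : lser R N, deg_le 0 V /\ lmul 0 0 U V = lone R N /\ lmul 0 0 V U = lone R N.
Proof.
case: N U => [|N] U hU0 hUd hUm.
  exists (lone R 0); split; first by move=> n _; apply/matrixP => -[].
  by split; apply/funext => n; apply/matrixP => -[].
pose Pu : {poly 'M[R]_N.+1} := \poly_(i < m.+1) U (- (i:int)).
have coefPu i : Pu`_i = U (- (i:int)).
  by rewrite coef_poly; case: ltnP => hi //; rewrite hUm //; lia.
pose Q := 1 - Pu.
have Q0 : Q`_0 = 0 by rewrite coefB coef1 coefPu oppr0 hU0 /= subrr.
have Qk k i : (i < k)%N -> (Q ^+ k)`_i = 0.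
  elim: k i => [|k IH] i hi; first by []. 
  rewrite exprS coefM big1 // => j _.
  have hj := ltn_ord j.
  case: (posnP j) => [->|hj0]; first by rewrite Q0 mul0r.
  by rewrite IH ?mulr0 //; lia.
pose W M := \sum_(k < M) Q ^+ k.
have PuQ : Pu = 1 - Q by rewrite /Q subKr.
have PW M : Pu * W M = 1 - Q ^+ M.
  elim: M => [|M IH]; first by rewrite /W big_ord0 mulr0 expr0 subrr.
  by rewrite /W big_ord_recr /= mulrDr IH PuQ mulrBl mul1r -exprS addrA subrK.
have WP M : W M * Pu = 1 - Q ^+ M.
  elim: M => [|M IH]; first by rewrite /W big_ord0 mul0r expr0 subrr.
  by rewrite /W big_ord_recr /= mulrDl IH PuQ mulrBr mulr1 -exprSr addrA subrK.
have stab M i : (i < M)%N -> (W M)`_i = (W i.+1)`_i.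
  elim: M => [//|M IH] hi.
  rewrite ltnS leq_eqVlt in hi; case/orP: hi => [/eqP ->//|hi].
  by rewrite /W big_ord_recr /= coefD Qk // addr0 IH.
exists (fun n => if n <= 0 then (W (absz n).+1)`_(absz n) else 0).
split; first by move=> n hn; rewrite leNgt hn.
split; apply/funext => n; rewrite /lmul /lone addr0.
- case: (lerP n 0) => hn; last first.
    by rewrite big1 // gt_eqF.
  have hk : absz (0 - n) = absz n by lia.
  rewrite hk.
  set k := absz n.
  have nk : n = - (k:int) by rewrite /k; lia.
  rewrite (eq_bigr (fun i : 'I_k.+1 => Pu`_(k - i) * (W k.+1)`_i)).
    rewrite -coefMr PW coefB coef1 Qk // subr0 nk.
    by case: (k) => [|k'] /=.
  move=> i _; have hi := ltn_ord i.
  have h0i : 0 - (i:int) <= 0 by lia.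
  rewrite coefPu nk h0i.
  have -> : absz (0 - (i:int)) = i by lia.
  rewrite (stab k.+1) //.
  rewrite mulmxE; congr (U _ * (W _)`_ _); lia.
- case: (lerP n 0) => hn; last first.
    by rewrite big1 // gt_eqF.
  have hk : absz (0 - n) = absz n by lia.
  rewrite hk.
  set k := absz n.
  have nk : n = - (k:int) by rewrite /k; lia.
  rewrite (eq_bigr (fun i : 'I_k.+1 => (W k.+1)`_(k - i) * Pu`_i)).
    rewrite -coefMr WP coefB coef1 Qk // subr0 nk.
    by case: (k) => [|k'] /=.
  move=> i _; have hi := ltn_ord i.
  have h0i : n - 0 + (i:int) <= 0 by lia.
  rewrite coefPu h0i.
  have -> : absz (n - 0 + (i:int)) = (k - i)%N by lia.
  rewrite (stab k.+1) ?ltnS ?leq_subr //.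
  rewrite mulmxE; congr ((W _)`_ _ * U _); lia.
Qed.


Theorem mainTheorem14 (R : realType) (N m : nat) (alpha : R)
    (hN : (2 <= N)%N) (hm : (1 <= m)%N) (halpha : alpha != 0)
    (d : 'I_N -> R -> R) (c : nat -> 'I_N -> R -> R)
    (hd : forall k t, derivable (d k) t 1)
    (hc : forall j k t, (1 <= j <= m)%N -> derivable (c j k) t 1) :
  let dt t := fun k => d k t in
  let ct t := fun j k => c j k t in
  let L t := Lmat alpha (dt t) in
  let U t := Umat m alpha (ct t) in
  let B1 t := B1mat alpha (dt t) (ct t) in
  let B2 t := B2mat alpha (dt t) (ct t) in
  ((* Lax triads  dL/dt = L B2 - B1 L,  dU/dt = U B2 - B1 U *)
   (forall t (n : int),
      mderive (fun s => L s n) t = lmul 1 1 (L t) (B2 t) n - lmul 1 1 (B1 t) (L t) n /\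
      mderive (fun s => U s n) t = lmul 0 1 (U t) (B2 t) n - lmul 1 0 (B1 t) (U t) n)
   <->
   (forall t,
      (forall k, derive1 (d k) t
         = (1 + alpha * d k t) * (c 1%N k t - c 1%N (cyc_prev k) t)) /\
      (forall j k, (1 <= j <= m - 1)%N ->
         derive1 (c j k) t
         = c j k t * (d (cyc_add k j) t - d k t + alpha * c 1%N (cyc_add k j) t
                      - alpha * c 1%N (cyc_prev k) t)
           + (c j.+1 k t - c j.+1 (cyc_prev k) t)) /\
      (forall k, derive1 (c m k) t
         = c m k t * (d (cyc_add k m) t - d k t + alpha * c 1%N (cyc_add k m) t
                      - alpha * c 1%N (cyc_prev k) t))))
  /\
  (forall t,
     (exists V : lser R N, deg_le 0 V /\
        lmul 0 0 (U t) V = lone R N /\ lmul 0 0 V (U t) = lone R N) /\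
     (forall V : lser R N, deg_le 0 V ->
        lmul 0 0 (U t) V = lone R N -> lmul 0 0 V (U t) = lone R N ->
        B1 t = piplus (fun n => alpha^-1 *: (lmul 1 0 (L t) V n - lone R N n)) /\
        B2 t = piplus (fun n => alpha^-1 *: (lmul 0 1 V (L t) n - lone R N n)))).

Proof.
cbv beta zeta.
split.
  split.
    move=> H t.
    have hdt : forall k, derivable (d k) t 1 := fun k => hd k t.
    have hct : forall j k, (1 <= j <= m)%N -> derivable (c j k) t 1 := fun j k h => hc j k t h.
    split; [|split].
    - move=> k; have := (H t 0).1.
      rewrite derL // (laxL _ hm) eqxx => /(congr1 (fun M : 'M[R]_N => M k k)).
      by rewrite !mxE !PmE eqxx !mul1r => /(mulfI halpha).
    - move=> j k /andP [hj1 hj2].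
      have [j' ej] : exists j', j = j'.+1 by exists j.-1; lia.
      subst j.
      have := (H t (Negz j')).2.
      rewrite derU // (laxU _ hm) /=.
      have -> : (j' < m)%N by lia.
      move=> /(congr1 (fun M : 'M[R]_N => M k (cyc_add k j'.+1))).
      rewrite !mxE !PmE eqxx !mul1r => /oppr_inj /(mulfI halpha) ->.
      rewrite /rhsU; have -> : (j'.+1 < m)%N by lia.
      by [].
    - move=> k.
      have := (H t (Negz m.-1)).2.
      rewrite derU // (laxU _ hm) /=.
      have -> : (m.-1 < m)%N by lia.
      have em : m.-1.+1 = m by lia.
      rewrite em.
      move=> /(congr1 (fun M : 'M[R]_N => M k (cyc_add k m))).
      rewrite !mxE !PmE eqxx !mul1r => /oppr_inj /(mulfI halpha) ->.
      by rewrite /rhsU ltnn addr0.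
  move=> H t n.
  have hdt : forall k, derivable (d k) t 1 := fun k => hd k t.
  have hct : forall j k, (1 <= j <= m)%N -> derivable (c j k) t 1 := fun j k h => hc j k t h.
  split.
    rewrite derL // (laxL _ hm); case: (n == 0) => //.
    by congr (_ *: _); apply: Pm_ext => // k; exact: (H t).1 k.
  rewrite derU // (laxU _ hm) //; case: n => // j.
  case: ifP => // hj.
  congr (- (_ *: _)); apply: Pm_ext => // k.
  rewrite /rhsU; case: ltnP => hj1.
    by apply: (H t).2.1; lia.
  have e : j.+1 = m by lia.
  by rewrite e addr0; exact: (H t).2.2 k.
move=> t; split.
  apply: (@inv_exists _ _ m).
  - by rewrite /Umat eqxx.
  - exact: Umat_deg.
  - case=> [n|j] hn; first by lia.
    rewrite UmatN; have -> : (j < m)%N = false by rewrite NegzE in hn; lia.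
    by [].
move=> V hV hUV hVU.
exact: (Bform hm).
Qed.
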